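(* Let $k\ge1$ and let $X,Y$ be $k$-good random valuations with $\|X\|_1\le M$ and $\|Y\|_1\le M$ almost surely, for some $M\ge1$. Then \[ |\textsc{Rev}(X)-\textsc{Rev}(Y)|\le(2M+1)\sqrt{\mathrm{Dist}(X,Y)} . \]
   Context: $\|x\|_1=\sum_i|x_i|$. $\mathrm{Dist}(X,Y)$ is the Prohorov distance between the distributions of $X$ and $Y$ with respect to $\|\cdot\|_1$: the infimum of all $\rho>0$ such that $\mathbb{P}[X\in A]\le\mathbb{P}[Y\in B_\rho(A)]+\rho$ and $\mathbb{P}[Y\in A]\le\mathbb{P}[X\in B_\rho(A)]+\rho$ for all measurable $A$, where $B_\rho(A)=\{y:\|y-x\|_1<\rho\text{ for some }x\in A\}$. A $k$-good random valuation is a random vector in $\mathbb{R}_+^k$ (no independence assumed). A mechanism is a pair $\mu=(q,s)$ of Borel functions $q:\mathbb{R}_+^k\to[0,1]^k$, $s:\mathbb{R}_+^k\to\mathbb{R}$, with buyer payoff $b(x)=q(x)\cdot x-s(x)$; IR: $b(x)\ge0$ for all $x$; IC: $b(x)\ge q(\tilde x)\cdot x-s(\tilde x)$ for all $x,\tilde x$. $\textsc{Rev}(X)=\sup\mathbb{E}[s(X)]$ over all IC and IR mechanisms. *)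

(* Defs.v *)
From HB Require Import structures.
From mathcomp Require Import all_boot all_order all_algebra.
From mathcomp Require Import all_classical all_reals all_analysis.
Set Implicit Arguments. Unset Strict Implicit. Unset Printing Implicit Defensive.
Import Order.TTheory GRing.Theory Num.Theory.
Local Open Scope classical_set_scope.
Local Open Scope ring_scope.

(* Valuations are elements of k.-tuple R, carrying the library's product
   (Borel) sigma-algebra generated by the coordinate projections. *)

Definition nonneg_val (R : realType) (k : nat) (x : k.-tuple R) : Prop :=
  forall i : 'I_k, 0 <= tnth x i.

Definition norm1 (R : realType) (k : nat) (x : k.-tuple R) : R :=
  \sum_(i < k) `|tnth x i|.

Definition dotv (R : realType) (k : nat) (q x : k.-tuple R) : R :=
  \sum_(i < k) tnth q i * tnth x i.

Definition ball1 (R : realType) (k : nat) (A : set (k.-tuple R)) (rho : R)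
  : set (k.-tuple R) :=
  [set y | exists2 x, A x & \sum_(i < k) `|tnth y i - tnth x i| < rho].

Definition mechanism (R : realType) (k : nat)
  (q : k.-tuple R -> k.-tuple R) (s : k.-tuple R -> R) : Prop :=
  [/\ measurable_fun setT q, measurable_fun setT s,
      (forall x, nonneg_val x -> forall i, 0 <= tnth (q x) i <= 1),
      (forall x, nonneg_val x -> 0 <= dotv (q x) x - s x) &
      (forall x xt, nonneg_val x -> nonneg_val xt ->
                  dotv (q xt) x - s xt <= dotv (q x) x - s x)].

Definition Rev (R : realType) (k : nat) d (T : measurableType d)
  (P : probability T R) (X : T -> k.-tuple R) : \bar R :=
  ereal_sup [set r | exists q s, mechanism q s /\
                      r = (\int[P]_t (s (X t))%:E)%E].

Definition Dist (R : realType) (k : nat)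
  d1 (T1 : measurableType d1) (P1 : probability T1 R) (X : T1 -> k.-tuple R)
  d2 (T2 : measurableType d2) (P2 : probability T2 R) (Y : T2 -> k.-tuple R)
  : R :=
  inf [set rho : R | 0 < rho /\
        forall A : set (k.-tuple R), measurable A ->
          (P1 (X @^-1` A) <= P2 (Y @^-1` ball1 A rho) + rho%:E)%E /\
          (P2 (Y @^-1` A) <= P1 (X @^-1` ball1 A rho) + rho%:E)%E].

(* Main.v *)
Require Import Defs.
From HB Require Import structures.
From mathcomp Require Import all_boot all_order all_algebra.
From mathcomp Require Import all_classical all_reals all_analysis.
From mathcomp Require Import lra measurable_realfun.
Import Order.TTheory GRing.Theory Num.Theory.
Local Open Scope classical_set_scope.
Local Open Scope ring_scope.

Section Vec.
Variables (R : realType) (k : nat).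
Implicit Types (q x y : k.-tuple R).

Definition zt : k.-tuple R := [tuple (0:R) | i < k].
Definition sct (c : R) x : k.-tuple R := [tuple c * tnth x i | i < k].

Lemma tnth_zt i : tnth zt i = 0.
Proof. by rewrite tnth_mktuple. Qed.
Lemma tnth_sct c x i : tnth (sct c x) i = c * tnth x i.
Proof. by rewrite tnth_mktuple. Qed.

Lemma nonneg_zt : nonneg_val zt.
Proof. by move=> i; rewrite tnth_zt. Qed.

Lemma nonneg_sct c x : 0 <= c -> nonneg_val x -> nonneg_val (sct c x).
Proof. by move=> c0 hx i; rewrite tnth_sct mulr_ge0. Qed.

Lemma dotv_zt q : dotv q zt = 0.
Proof. by rewrite /dotv big1 // => i _; rewrite tnth_zt mulr0. Qed.

Lemma dotv_sct q c x : dotv q (sct c x) = c * dotv q x.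
Proof.
rewrite /dotv mulr_sumr; apply: eq_bigr => i _.
by rewrite tnth_sct mulrCA.
Qed.

Lemma dotv_ge0 q x : (forall i, 0 <= tnth q i) -> nonneg_val x -> 0 <= dotv q x.
Proof. by move=> hq hx; apply: sumr_ge0 => i _; rewrite mulr_ge0. Qed.

Lemma dotv_le_norm q x : (forall i, 0 <= tnth q i <= 1) -> nonneg_val x ->
  dotv q x <= norm1 x.
Proof.
move=> hq hx; apply: ler_sum => i _.
have /andP[h0 h1] := hq i; have := hx i.
rewrite ger0_norm // => hxi; exact: ler_piMl.
Qed.

Lemma dotv_diff (qy qz : k.-tuple R) x y : (forall i, 0 <= tnth qy i <= 1) ->
  (forall i, 0 <= tnth qz i <= 1) ->
  dotv qy y + dotv qz x - dotv qz y - dotv qy x <= \sum_(i < k) `|tnth x i - tnth y i|.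
Proof.
move=> hy hz; rewrite /dotv -big_split /= -!sumrB; apply: ler_sum => i _.
have /andP[a0 a1] := hy i; have /andP[b0 b1] := hz i.
move: a0 a1 b0 b1; set a := tnth qy i; set b := tnth qz i; set u := tnth x i; set v := tnth y i.
move=> a0 a1 b0 b1.
have [uv|uv] := lerP u v.
- have h : 0 <= (1 - a + b) * (v - u) by apply: mulr_ge0; lra.
  nra.
- have h : 0 <= (1 + a - b) * (u - v) by apply: mulr_ge0; lra.
  nra.
Qed.

Lemma measurable_sct c : measurable_fun setT (sct c).
Proof.
apply/measurable_fun_tnthP => i.
rewrite (_ : _ \o _ = fun x => c * tnth x i); last first.
  by apply/funext => x /=; rewrite tnth_sct.
apply: measurable_funM => //; exact: measurable_tnth.
Qed.

End Vec.
Arguments tnth_zt {R k}.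
Arguments tnth_sct {R k}.
Arguments nonneg_zt {R k}.
Arguments nonneg_sct {R k c x}.
Arguments dotv_zt {R k}.
Arguments dotv_sct {R k}.
Arguments dotv_ge0 {R k q x}.
Arguments dotv_le_norm {R k q x}.
Arguments dotv_diff {R k qy qz}.
Arguments measurable_sct {R k}.
Arguments sct {R k}.


Section Mech.
Variables (R : realType) (k : nat) (q : k.-tuple R -> k.-tuple R) (s : k.-tuple R -> R).
Hypothesis hm : mechanism q s.

Lemma mech_q {x} : nonneg_val x -> forall i, 0 <= tnth (q x) i <= 1.
Proof. by case: hm => _ _ H _ _; exact: H. Qed.
Lemma mech_IR {x} : nonneg_val x -> 0 <= dotv (q x) x - s x.
Proof. by case: hm => _ _ _ H _; exact: H. Qed.
Lemma mech_IC {x xt} : nonneg_val x -> nonneg_val xt ->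
  dotv (q xt) x - s xt <= dotv (q x) x - s x.
Proof. by case: hm => _ _ _ _ H; exact: H. Qed.

Lemma s0_le0 : s (zt R k) <= 0.
Proof. have := mech_IR ((@nonneg_zt R k)); rewrite dotv_zt; lra. Qed.

Lemma s0_le {x} : nonneg_val x -> s (zt R k) <= s x.
Proof.
move=> hx; have := mech_IC ((@nonneg_zt R k)) hx; rewrite !dotv_zt; lra.
Qed.

Lemma s_le_norm {x} : nonneg_val x -> s x <= norm1 x + s (zt R k).
Proof.
move=> hx; have := mech_IC hx ((@nonneg_zt R k)).
have h1 := dotv_le_norm (mech_q hx) hx.
have h2 : 0 <= dotv (q (zt R k)) x.
  by apply: dotv_ge0 hx => i; have /andP[] := mech_q ((@nonneg_zt R k)) i.
lra.
Qed.

Lemma s_le_norm' {x} : nonneg_val x -> s x <= norm1 x.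
Proof. by move=> hx; have := s_le_norm hx; have := s0_le0; lra. Qed.

Lemma s_perturb (e : R) x y : 0 < e < 1 -> nonneg_val x -> nonneg_val y ->
  e * s y - \sum_(i < k) `|tnth x i - tnth y i| <= e * s (sct ((1 - e)^-1) x).
Proof.
move=> /andP[e0 e1] hx hy.
have c0 : 0 < (1 - e)^-1 by rewrite invr_gt0 subr_gt0.
set z := sct ((1 - e)^-1) x.
have hz : nonneg_val z by apply: nonneg_sct => //; exact: ltW.
have IC1 := mech_IC hy hz.
have IC2 := mech_IC hz hy.
rewrite /z !dotv_sct in IC2.
have hd := dotv_diff x y (mech_q hy) (mech_q hz).
set A := dotv (q y) x in IC2 hd; set B := dotv (q z) x in IC2 hd.
set C := dotv (q z) y in IC1 hd; set D := dotv (q y) y in IC1 hd.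
have IC2' : A - (1 - e) * s y <= B - (1 - e) * s z.
  have h1e : 0 < 1 - e by rewrite subr_gt0.
  have := ler_wpM2l (ltW h1e) IC2.
  rewrite !mulrBr !mulrA mulrV ?unitfE ?gt_eqF // !mul1r.
by [].
lra.
Qed.

Lemma nudge_mech (c : R) : 0 < c ->
  mechanism (fun x => q (sct c x)) (fun x => c^-1 * s (sct c x)).
Proof.
move=> c0; have hsc (x : k.-tuple R) : nonneg_val x -> nonneg_val (sct c x).
  by move=> hx; apply: nonneg_sct => //; exact: ltW.
have key x y : dotv (q y) x = c^-1 * dotv (q y) (sct c x).
  by rewrite dotv_sct mulrA mulVf ?gt_eqF // mul1r.
split.
- apply: measurableT_comp; first by case: hm => ? ? _ _ _.
  exact: measurable_sct.
- apply: measurable_funM => //; apply: measurableT_comp; first by case: hm => ? ? _ _ _.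
  exact: measurable_sct.
- by move=> x hx; apply: mech_q; exact: hsc.
- move=> x hx; rewrite key -mulrBr; apply: mulr_ge0.
    by rewrite invr_ge0 ltW.
  exact: mech_IR (hsc _ hx).
- move=> x xt hx hxt; rewrite !(key x) -!mulrBr; apply: ler_wpM2l.
    by rewrite invr_ge0 ltW.
  exact: mech_IC (hsc _ hx) (hsc _ hxt).
Qed.

End Mech.
Arguments mech_q {R k q s} hm {x}.
Arguments mech_IR {R k q s} hm {x}.
Arguments mech_IC {R k q s} hm {x xt}.
Arguments s0_le0 {R k q s} hm.
Arguments s0_le {R k q s} hm {x}.
Arguments s_le_norm {R k q s} hm {x}.
Arguments s_le_norm' {R k q s} hm {x}.
Arguments s_perturb {R k q s} hm.
Arguments nudge_mech {R k q s} hm.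


Section Count.
Variable R : realType.

Definition cnt (N : nat) (D v : R) : R := \sum_(j < N) ((((j.+1)%:R * D < v)%R)%:R : R).

Lemma cnt_lb N D v : 0 < D -> 0 <= v -> D * cnt N D v <= v /\ cnt N D v <= N%:R.
Proof.
move=> D0 v0; elim: N => [|N [IH1 IH2]].
  by rewrite /cnt big_ord0 mulr0.
rewrite /cnt big_ord_recr /= -/(cnt N D v).
have [h|h] := ltrP (N.+1%:R * D) v.
- rewrite mulr1n; split; last by rewrite -natr1 lerD2r.
  rewrite mulrDr mulr1.
  have : D * cnt N D v <= N%:R * D by rewrite mulrC ler_wpM2r // ltW.
  rewrite -natr1 mulrDl mul1r in h; lra.
- by rewrite mulr0n addr0; split => //; rewrite (le_trans IH2) // ler_nat.
Qed.

Lemma cnt_ub N D v : 0 < D ->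
  (v <= N.+1%:R * D -> v <= D + D * cnt N D v) /\
  (N.+1%:R * D < v -> cnt N D v = N%:R).
Proof.
move=> D0; elim: N => [|N [IH1 IH2]].
  by rewrite /cnt big_ord0 mulr0 addr0 mul1r; split.
rewrite /cnt big_ord_recr /= -/(cnt N D v).
have [h|h] := ltrP (N.+1%:R * D) v.
- rewrite mulr1n (IH2 h); split.
    by move=> hv; rewrite -addn2 natrD in hv; nra.
  by rewrite natr1.
- rewrite mulr0n addr0; split; first by move=> _; exact: IH1.
  move=> h'; exfalso.
  have : N.+1%:R * D <= N.+2%:R * D by apply: ler_wpM2r; [exact: ltW | rewrite ler_nat].
  lra.
Qed.

End Count.

Section Key.
Variable R : realType.
Local Open Scope ereal_scope.

Lemma meas_lt d (T : measurableType d) (f : T -> R) (r : R) :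
  measurable_fun setT f -> measurable [set t | (r < f t)%R].
Proof.
move=> mf; have := mf measurableT `]r, +oo[%classic (measurable_itv _).
rewrite setTI; congr measurable; apply/seteqP; split => t /=;
  by rewrite in_itv /= andbT.
Qed.

Lemma indic_lt d (T : measurableType d) (f : T -> R) (r : R) t :
  \1_[set t | (r < f t)%R] t = ((r < f t)%R)%:R :> R.
Proof.
rewrite indicE; case: (boolP (r < f t)%R) => h.
  by rewrite mem_set.
by rewrite memNset //= => h'; rewrite h' in h.
Qed.

Lemma int_step d (T : measurableType d) (P : probability T R) (F : nat -> set T)
  (N : nat) (a D : R) : (0 <= a)%R -> (0 <= D)%R -> (forall j, measurable (F j)) ->
  \int[P]_t ((a + D * \sum_(j < N) \1_(F j) t)%:E) =
  ((a + D * \sum_(j < N) fine (P (F j)))%R)%:E.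
Proof.
move=> a0 D0 mF.
rewrite (_ : (fun t => _) = (fun t => a%:E + D%:E * \sum_(j < N) (\1_(F j) t)%:E));
  last by apply/funext => t; rewrite EFinD EFinM sumEFin.
have mS : measurable_fun setT (fun t => \sum_(j < N) (\1_(F j) t)%:E : \bar R).
  apply: emeasurable_sum => j; apply/measurable_EFinP; exact: measurable_indic.
rewrite ge0_integralD //; first last.
- by apply: measurable_funeM.
- by move=> t _; apply: mule_ge0; rewrite ?lee_fin // sume_ge0 // => j _; rewrite lee_fin.
have ca : \int[P]_(x in setT) (a%:E) = a%:E.
  have := integral_cst P measurableT a%:E; rewrite /cst /= => ->; by rewrite probability_setT mule1.
rewrite ca.
rewrite ge0_integralZl_EFin //; last first.
  by move=> t _; rewrite sume_ge0 // => j _; rewrite lee_fin.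
rewrite ge0_integral_sum //.
rewrite (eq_bigr (fun k : 'I_N => (fine (P (F k)))%:E)); last first.
  by move=> k _; rewrite integral_indic // setIT fineK // fin_num_measure.
  by rewrite sumEFin -EFinM -EFinD.
by move=> j; apply/measurable_EFinP; exact: measurable_indic.
Qed.

End Key.

Section Key0.
Variable R : realType.
Local Open Scope ereal_scope.

Lemma key0 d1 (T1 : measurableType d1) (P1 : probability T1 R)
  d2 (T2 : measurableType d2) (P2 : probability T2 R)
  (G : T1 -> R) (H : T2 -> R) (W rho : R) :
  measurable_fun setT G -> measurable_fun setT H -> (0 <= W)%R -> (0 <= rho)%R ->
  (forall t, 0 <= G t)%R -> (forall t, 0 <= H t)%R ->
  {ae P2, forall t, (H t <= W)%R} ->
  (forall r : R, P2 [set t | (r < H t)%R] <= P1 [set t | (r < G t)%R] + rho%:E) ->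
  \int[P2]_t (H t)%:E <= \int[P1]_t (G t)%:E + (W * rho)%:E.
Proof.
move=> mG mH W0 r0 G0 H0 HW hP.
apply/lee_addgt0Pr => D D0.
set N := Num.truncn (W / D).
have /andP[hN1 hN2] := Num.Theory.truncn_itv (divr_ge0 W0 (ltW D0)).
have NDW : (N%:R * D <= W)%R by rewrite -ler_pdivlMr.
have WND : (W < N.+1%:R * D)%R by rewrite -ltr_pdivrMr.
pose I (j : nat) := [set t | ((j.+1)%:R * D < G t)%R].
pose J (j : nat) := [set t | ((j.+1)%:R * D < H t)%R].
have mI j : measurable (I j) by exact: meas_lt.
have mJ j : measurable (J j) by exact: meas_lt.
have hp j : (fine (P2 (J j)) <= fine (P1 (I j)) + rho)%R.
  have := hP ((j.+1)%:R * D)%R.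
  rewrite -[P2 (J j)]fineK ?fin_num_measure // -[P1 (I j)]fineK ?fin_num_measure //.
have iH : \int[P2]_t (H t)%:E <=
    ((D + D * \sum_(j < N) fine (P2 (J j)))%R)%:E.
  rewrite -int_step ?(ltW D0) //.
  apply: ae_ge0_le_integral => //.
  - by move=> t _; rewrite lee_fin.
  - exact/measurable_EFinP.
  - move=> t _; rewrite lee_fin; apply: addr_ge0; first exact: ltW.
    apply: mulr_ge0; first exact: ltW.
    by apply: sumr_ge0 => j _; rewrite indicE ler0n.
  - apply/measurable_EFinP; apply: measurable_funD => //.
    apply: measurable_funM => //; apply: measurable_sum => j.
    exact: measurable_indic.
  apply: filterS HW => t Ht _; rewrite lee_fin.
  have [h _] := @cnt_ub R N D (H t) D0.
  rewrite (eq_bigr (fun j : 'I_N => (((j.+1)%:R * D < H t)%R)%:R)); last first.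
    by move=> j _; rewrite indic_lt.
  apply: h; rewrite le_eqVlt; apply/orP; right; exact: le_lt_trans Ht WND.
have iG : (((0 + D * \sum_(j < N) fine (P1 (I j)))%R)%:E <= \int[P1]_t (G t)%:E).
  rewrite -int_step ?(ltW D0) //.
  apply: ge0_le_integral => //.
  - move=> t _; rewrite lee_fin add0r; apply: mulr_ge0; first exact: ltW.
    by apply: sumr_ge0 => j _; rewrite indicE ler0n.
  - apply/measurable_EFinP; apply: measurable_funD => //.
    apply: measurable_funM => //; apply: measurable_sum => j.
    exact: measurable_indic.
  - exact/measurable_EFinP.
  move=> t _; rewrite lee_fin add0r.
  have [h _] := @cnt_lb R N D (G t) D0 (G0 t).
  rewrite (eq_bigr (fun j : 'I_N => (((j.+1)%:R * D < G t)%R)%:R)); last first.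
    by move=> j _; rewrite indic_lt.
  exact: h.
have hs : (\sum_(j < N) fine (P2 (J j)) <= \sum_(j < N) fine (P1 (I j)) + N%:R * rho)%R.
  apply: (le_trans (ler_sum _ (fun (j : 'I_N) _ => hp j))).
  by rewrite big_split /= sumr_const card_ord mulr_natl.
apply: (le_trans iH); rewrite add0r in iG.
rewrite -addeA; apply: le_trans (leeD2r _ iG); rewrite -!EFinD lee_fin.
have : (D * \sum_(j < N) fine (P2 (J j)) <= D * (\sum_(j < N) fine (P1 (I j)) + N%:R * rho))%R.
  by apply: ler_wpM2l => //; exact: ltW.
have : (D * (N%:R * rho) <= W * rho)%R.
  by rewrite mulrA [(D * _)%R]mulrC; apply: ler_wpM2r.
lra.
Qed.

End Key0.


Section Ball.
Variables (R : realType) (k : nat).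

Definition dist1 (x y : k.-tuple R) : R := \sum_(i < k) `|tnth x i - tnth y i|.

Lemma dist1_tri x y z : dist1 x z <= dist1 x y + dist1 y z.
Proof. rewrite /dist1 -big_split /=; apply: ler_sum => i _; exact: ler_distD. Qed.

Lemma dist1C x y : dist1 x y = dist1 y x.
Proof. by apply: eq_bigr => i _; rewrite distrC. Qed.

Lemma meas_ltr d (T : measurableType d) (f : T -> R) (r : R) :
  measurable_fun setT f -> measurable [set t | f t < r].
Proof.
move=> mf; have := mf measurableT `]-oo, r[%classic (measurable_itv _).
rewrite setTI; congr measurable; apply/seteqP; split => t /=;
  by rewrite in_itv /=.
Qed.

Lemma measurable_dist1 (c : k.-tuple R) : measurable_fun setT (fun y => dist1 y c).
Proof.
apply: measurable_sum => i; apply: measurableT_comp => //.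
apply: measurable_funB => //; exact: measurable_tnth.
Qed.

Definition rt (r : k.-tuple rat) : k.-tuple R := [tuple ratr (tnth r i) | i < k].

Lemma ball1_measurable (A : set (k.-tuple R)) rho : measurable (ball1 A rho).
Proof.
pose F (p : (k.-tuple rat * rat)%type) : set (k.-tuple R) :=
  [set y | (exists2 x, A x & dist1 (rt p.1) x < rho - ratr p.2) /\
           dist1 y (rt p.1) < ratr p.2].
have -> : ball1 A rho = \bigcup_p F p.
  apply/seteqP; split => [y [x Ax hyx]|y [p _ [[x Ax h1] h2]]]; last first.
    exists x => //; have := dist1_tri y (rt p.1) x; rewrite /dist1 in h1 h2 * => h; lra.
  set delta := rho - dist1 y x.
  have d0 : 0 < delta by rewrite /delta subr_gt0.
  set eps := delta / 3 / (k.+1)%:R.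
  have e0 : 0 < eps by rewrite /eps !divr_gt0 // ltr0n.
  have hq : forall i : 'I_k, exists q : rat,
      ratr q \in `](tnth y i - eps), (tnth y i + eps)[.
    move=> i; apply: rat_in_itvoo; lra.
  have [f hf] := boolp.choice hq.
  set r := [tuple f i | i < k].
  have dyr : dist1 y (rt r) < delta / 3.
    apply: (@le_lt_trans _ _ (k%:R * eps)).
      have -> : k%:R * eps = \sum_(i < k) eps by rewrite sumr_const card_ord mulr_natl.
      apply: ler_sum => i _.
      rewrite /rt !tnth_mktuple; have := hf i; rewrite in_itv /= => /andP[h1 h2].
      rewrite ler_norml; apply/andP; split; lra.
    have ha : 0 < delta / 3 by rewrite divr_gt0.
    move: ha; rewrite /eps; set a := delta / 3 => ha.
    rewrite mulrA ltr_pdivrMr ?ltr0n //.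
    have -> : k.+1%:R = k%:R + 1 :> R by rewrite natr1.
    nra.
  have [eta heta] : exists eta : rat, ratr eta \in `](delta / 3), (2 * delta / 3)[.
    apply: rat_in_itvoo; lra.
  move: heta; rewrite in_itv /= => /andP[he1 he2].
  exists (r, eta) => //=; split; last lra.
  exists x => //.
  have h1 := dist1_tri (rt r) y x.
  rewrite (dist1C (rt r) y) in h1.
  rewrite /delta in dyr he1 he2; lra.
apply: countable_bigcupT_measurable; first exact: countableP.
move=> p; have [h|h] := pselect (exists2 x, A x & dist1 (rt p.1) x < rho - ratr p.2).
- rewrite (_ : F p = [set y | dist1 y (rt p.1) < ratr p.2]); last first.
    by apply/seteqP; split => y /= => [[]//|?]; split.
  apply: meas_ltr; exact: measurable_dist1.
- rewrite (_ : F p = set0) //; apply/seteqP; split => y //= [] //.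
Qed.

End Ball.


Section Integ.
Variable R : realType.

Lemma norm1_sct k (c : R) (x : k.-tuple R) : 0 <= c -> norm1 (sct c x) = c * norm1 x.
Proof.
move=> c0; rewrite /norm1 mulr_sumr; apply: eq_bigr => i _.
by rewrite tnth_sct normrM ger0_norm.
Qed.

Lemma int_bdd d (T : measurableType d) (P : probability T R) (f : T -> R) a b :
  measurable_fun setT f -> (forall t, a <= f t) -> {ae P, forall t, f t <= b} ->
  P.-integrable setT (EFin \o f).
Proof.
move=> mf ha hb; apply/integrableP; split; first exact/measurable_EFinP.
apply: (le_lt_trans (integral_le_bound ((`|a| + `|b|)%:E) _ _ _ _)).
- exact: measurableT.
- exact/measurable_EFinP.
- by rewrite lee_fin addr_ge0.
- apply: filterS hb => t ht _; rewrite /comp abse_EFin lee_fin.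
  have := ha t; have := ler_norm b; have := ler_norm (- a); rewrite normrN => h1 h2 h3.
  have := normr_ge0 a; have := normr_ge0 b; move=> n1 n2.
  rewrite ler_norml; apply/andP; split; lra.
rewrite [X in (_ * X)%E](_ : _ = 1%E); last exact: probability_setT.
by rewrite mule1 ltry.
Qed.

Lemma int_cstP d (T : measurableType d) (P : probability T R) (c : R) :
  (\int[P]_t (c%:E))%E = c%:E.
Proof.
have := integral_cst P measurableT c%:E; rewrite /cst /= => ->.
rewrite [X in (_ * X)%E](_ : _ = 1%E) ?mule1 //; exact: probability_setT.
Qed.

Lemma int_fin d (T : measurableType d) (P : probability T R) (f : T -> R) :
  P.-integrable setT (EFin \o f) ->
  (\int[P]_t (f t)%:E)%E = (fine (\int[P]_t (f t)%:E))%:E.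
Proof. by move=> hf; rewrite fineK //; exact: (integrable_fin_num measurableT hf). Qed.

Lemma int_affine d (T : measurableType d) (P : probability T R) (f : T -> R) (c u : R) :
  P.-integrable setT (EFin \o f) ->
  (\int[P]_t ((c * f t + u)%:E))%E = (c * fine (\int[P]_t (f t)%:E) + u)%:E.
Proof.
move=> hf.
rewrite (_ : (fun t => _) = (fun t => (c%:E * (f t)%:E) + (cst u%:E) t)%E); last first.
  by apply/funext => t; rewrite EFinD EFinM.
rewrite integralD //; last 2 first.
- exact: integrableZl.
- exact: finite_measure_integrable_cst.
rewrite integralZl // int_cstP int_fin //.
Qed.

Lemma int_le_bound d (T : measurableType d) (P : probability T R) (f : T -> R) a b :
  a <= b -> measurable_fun setT f -> (forall t, a <= f t) -> {ae P, forall t, f t <= b} ->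
  fine (\int[P]_t (f t)%:E) <= b.
Proof.
move=> ab mf ha hb; have hi := @int_bdd d T P f a b mf ha hb.
have := @int_affine d T P f 1 (- a) hi; rewrite mul1r => e1.
have : (\int[P]_t ((1 * f t + - a)%:E) <= \int[P]_t ((b - a)%:E))%E.
  apply: ae_ge0_le_integral => //.
  - by move=> t _; rewrite lee_fin mul1r subr_ge0.
  - apply/measurable_EFinP; apply: measurable_funD => //.
    by under eq_fun do rewrite mul1r.
  - by move=> t _; rewrite lee_fin subr_ge0.
  - apply: filterS hb => t ht _; rewrite lee_fin; lra.
rewrite e1.
rewrite int_cstP lee_fin; lra.
Qed.

End Integ.
Arguments int_bdd {R d T P f a b}.
Arguments int_le_bound {R d T P f a b}.
Arguments int_fin {R d T P f}.
Arguments int_affine {R d T P f}.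


Section Main.
Variables (R : realType) (k : nat).

Lemma nonneg_measurable : measurable [set y : k.-tuple R | nonneg_val y].
Proof.
have -> : [set y : k.-tuple R | nonneg_val y] =
    \bigcap_(i in [set: 'I_k]) [set y | 0 <= tnth y i].
  by apply/seteqP; split => y /= h i; [move=> _; exact: h | exact: h].
apply: fin_bigcap_measurable => // i _.
have := @measurable_tnth _ R k i measurableT `[0, +oo[%classic (measurable_itv _).
rewrite setTI; congr measurable; apply/seteqP; split => t /=;
  by rewrite in_itv /= andbT.
Qed.

Lemma zero_mech : mechanism (fun _ : k.-tuple R => zt R k) (fun _ => 0).
Proof.
split => //.
- by move=> x hx i; rewrite tnth_zt lexx ler01.
- move=> x hx; rewrite /dotv big1 ?subrr // => i _; by rewrite tnth_zt mul0r.
Qed.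

Lemma Rev_ge0 (d : measure_display) (T : measurableType d) (P : probability T R)
  (X : T -> k.-tuple R) : (0 <= Rev P X)%E.
Proof.
apply: ereal_sup_ubound; exists (fun _ => zt R k), (fun _ => 0); split.
  exact: zero_mech.
by rewrite int_cstP.
Qed.

Lemma Rev_le (d : measure_display) (T : measurableType d) (P : probability T R)
  (X : T -> k.-tuple R) (M : R)
  (mX : measurable_fun setT X) (Xn : forall t, nonneg_val (X t))
  (M0 : 0 <= M) (Xb : {ae P, forall t, norm1 (X t) <= M}) : (Rev P X <= M%:E)%E.
Proof.
apply: ge_ereal_sup => _ [q [s [hm ->]]].
have ms : measurable_fun setT s by case: hm.
have mS : measurable_fun setT (fun t => s (X t)) by exact: measurableT_comp ms mX.
have hlo t : s (zt R k) <= s (X t) := s0_le hm (Xn t).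
have hhi : {ae P, forall t, s (X t) <= M}.
  apply: filterS Xb => t h; have := s_le_norm' hm (Xn t); lra.
have s0M : s (zt R k) <= M by have := s0_le0 hm; lra.
rewrite (int_fin (int_bdd mS hlo hhi)) lee_fin.
exact: int_le_bound s0M mS hlo hhi.
Qed.

End Main.


Lemma main_dir (R : realType) (k : nat)
  (d1 : measure_display) (T1 : measurableType d1) (P1 : probability T1 R)
  (X : T1 -> k.-tuple R)
  (d2 : measure_display) (T2 : measurableType d2) (P2 : probability T2 R)
  (Y : T2 -> k.-tuple R) (M : R)
  (mX : measurable_fun setT X) (mY : measurable_fun setT Y)
  (Xn : forall t, nonneg_val (X t)) (Yn : forall t, nonneg_val (Y t))
  (M0 : 0 <= M)
  (Xb : {ae P1, forall t, norm1 (X t) <= M})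
  (Yb : {ae P2, forall t, norm1 (Y t) <= M}) (rho : R) :
  0 < rho -> rho < 1 ->
  (forall A, measurable A ->
     (P2 (Y @^-1` A) <= P1 (X @^-1` ball1 A rho) + rho%:E)%E) ->
  (Rev P2 Y <= Rev P1 X + ((2 * M + 1) * Num.sqrt rho)%:E)%E.
Proof.
move=> r0 r1 hP.
set e := Num.sqrt rho.
have e0 : 0 < e by rewrite sqrtr_gt0.
have ee : e ^+ 2 = rho by rewrite sqr_sqrtr // ltW.
have e1 : e < 1 by rewrite expr2 in ee; nra.
have c0 : 0 < (1 - e)^-1 by rewrite invr_gt0 subr_gt0.
have cinv : ((1 - e)^-1)^-1 = 1 - e by rewrite invrK.
apply: ge_ereal_sup => _ [q [s [hm ->]]].
have ms : measurable_fun setT s by case: hm.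
have s00 : s (zt R k) <= 0 := s0_le0 hm.
have mSY : measurable_fun setT (fun t => s (Y t)) by exact: measurableT_comp ms mY.
have hYlo t : s (zt R k) <= s (Y t) := s0_le hm (Yn t).
have hYhi : {ae P2, forall t, s (Y t) <= M + s (zt R k)}.
  by apply: filterS Yb => t h; have := s_le_norm hm (Yn t); lra.
have hYhi' : {ae P2, forall t, s (Y t) <= M}.
  by apply: filterS hYhi => t h; lra.
have iY := int_bdd mSY hYlo hYhi.
set SY := fine (\int[P2]_t (s (Y t))%:E).
have SYM : SY <= M by apply: (int_le_bound _ mSY hYlo hYhi'); lra.
pose f2 t := s (sct ((1 - e)^-1) (X t)).
have mf2 : measurable_fun setT f2.
  apply: measurableT_comp ms _; apply: measurableT_comp mX; exact: measurable_sct.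
have hXlo t : s (zt R k) <= f2 t := s0_le hm (nonneg_sct (ltW c0) (Xn t)).
have hXhi : {ae P1, forall t, f2 t <= ((1 - e)^-1) * M + s (zt R k)}.
  apply: filterS Xb => t h; have := s_le_norm hm (nonneg_sct (ltW c0) (Xn t)).
  rewrite norm1_sct ?(ltW c0) // => h'.
  have : ((1 - e)^-1) * norm1 (X t) <= ((1 - e)^-1) * M by apply: ler_wpM2l => //; exact: ltW.
  rewrite /f2; lra.
have iX := int_bdd mf2 hXlo hXhi.
set SX := fine (\int[P1]_t (f2 t)%:E).
have hm' := nudge_mech hm _ c0.
have RX : (((1 - e) * SX)%:E <= Rev P1 X)%E.
  apply: ereal_sup_ubound; exists (fun x => q (sct ((1 - e)^-1) x)), (fun x => ((1 - e)^-1)^-1 * s (sct ((1 - e)^-1) x)).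
  split => //=; rewrite cinv.
  have := int_affine (1 - e) 0 iX; rewrite addr0 => <-.
  by apply: eq_integral => t _; rewrite addr0.
pose G t := (1 - e) * f2 t + - ((1 - e) * (s (zt R k) - e)).
pose H t := (1 - e) * s (Y t) + - ((1 - e) * s (zt R k)).
pose W := M + (1 - e) * e.
have mG : measurable_fun setT G.
  apply: measurable_funD => //; apply: measurable_funM => //.
have mH : measurable_fun setT H.
  apply: measurable_funD => //; apply: measurable_funM => //.
have G0 t : 0 <= G t.
  have := hXlo t; rewrite /G => h.
  have : 0 <= (1 - e) * (f2 t - (s (zt R k) - e)) by apply: mulr_ge0; lra.
  lra.
have H0 t : 0 <= H t.
  have := hYlo t; rewrite /H => h.
  have : 0 <= (1 - e) * (s (Y t) - s (zt R k)) by apply: mulr_ge0; lra.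
  lra.
have HW : {ae P2, forall t, H t <= W}.
  apply: filterS hYhi => t h; rewrite /H /W.
  have : (1 - e) * (s (Y t) - s (zt R k)) <= (1 - e) * M by apply: ler_wpM2l; lra.
  have : 0 <= (1 - e) * e by apply: mulr_ge0; lra.
  have : (1 - e) * M <= M by rewrite ler_piMl //; lra.
  lra.
have hPr : forall r : R,
    (P2 [set t | (r < H t)%R] <= P1 [set t | (r < G t)%R] + (e ^+ 2)%:E)%E.
  move=> r.
  pose A := [set y : k.-tuple R | nonneg_val y] `&`
            [set y | r < (1 - e) * s y + - ((1 - e) * s (zt R k))].
  have mA : measurable A.
    apply: measurableI; first exact: nonneg_measurable.
    apply: meas_lt; apply: measurable_funD => //; exact: measurable_funM.
  have hYA : Y @^-1` A = [set t | r < H t].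
    by apply/seteqP; split => t /= => [[]//|h]; split => //; exact: Yn.
  have := hP A mA; rewrite hYA ee => h; apply: (le_trans h); apply: leeD2r.
  apply: le_measure; rewrite ?inE.
  - have := mX measurableT _ (@ball1_measurable R k A rho); rewrite setTI; exact.
  - exact: meas_lt.
  move=> t [y [ny hy] hd].
  have := s_perturb hm e (X t) y (introT andP (conj e0 e1)) (Xn t) ny.
  move=> hpert.
  rewrite /G /= -/(f2 t) /=.
  move: hy hd; rewrite /= -ee expr2 => hy hd.
  rewrite /f2.
  set F := s (sct (1 - e)^-1 (X t)) in hpert *.
  have h1 : 0 < e * (F - s y + e) by lra.
  rewrite pmulr_rgt0 // in h1.
  have h2 : 0 < (1 - e) * (F - s y + e) by apply: mulr_gt0; lra.
  lra.
have W0 : 0 <= W.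
  rewrite /W; have : 0 <= (1 - e) * e by apply: mulr_ge0; lra.
  lra.
have := @key0 R d1 T1 P1 d2 T2 P2 G H W (e ^+ 2) mG mH W0 (sqr_ge0 e) G0 H0 HW hPr.
rewrite /G /H (int_affine _ _ iY) (int_affine _ _ iX) -/SY -/SX -EFinD lee_fin => hk.
rewrite (int_fin iY) -/SY.
apply: (@le_trans _ _ (((1 - e) * SX)%:E + ((2 * M + 1) * e)%:E)%E); last first.
  exact: leeD2r.
rewrite -EFinD lee_fin.
have h1 : e * SY <= e * M by apply: ler_wpM2l; lra.
have h2 : M * (e * e) <= M * e.
  apply: ler_wpM2l => //; rewrite -[X in _ <= X]mulr1; apply: ler_wpM2l; lra.
have h3 : (1 - e) * e * (e * e) <= e * e.
  rewrite -[X in _ <= X]mul1r; apply: ler_wpM2r; first by apply: mulr_ge0; lra.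
  nra.
rewrite /W expr2 in hk.
lra.
Qed.


Theorem proposition6 (R : realType) (k : nat) (hk : (1 <= k)%N)
  (d1 : measure_display) (T1 : measurableType d1) (P1 : probability T1 R)
  (X : T1 -> k.-tuple R)
  (d2 : measure_display) (T2 : measurableType d2) (P2 : probability T2 R)
  (Y : T2 -> k.-tuple R)
  (M : R)
  (mX : measurable_fun setT X) (mY : measurable_fun setT Y)
  (X_nonneg : forall t, nonneg_val (X t)) (Y_nonneg : forall t, nonneg_val (Y t))
  (hM : 1 <= M)
  (X_bd : {ae P1, forall t, norm1 (X t) <= M})
  (Y_bd : {ae P2, forall t, norm1 (Y t) <= M}) :
  (`| Rev P1 X - Rev P2 Y | <=
     ((2 * M + 1) * Num.sqrt (Dist P1 X P2 Y))%:E)%E.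
Proof.
have M0 : 0 <= M by lra.
have hX0 := @Rev_ge0 R k _ _ P1 X; have hXM := @Rev_le R k _ _ P1 X M mX X_nonneg M0 X_bd.
have hY0 := @Rev_ge0 R k _ _ P2 Y; have hYM := @Rev_le R k _ _ P2 Y M mY Y_nonneg M0 Y_bd.
have fX : Rev P1 X \is a fin_num by rewrite ge0_fin_numE // (le_lt_trans hXM) // ltry.
have fY : Rev P2 Y \is a fin_num by rewrite ge0_fin_numE // (le_lt_trans hYM) // ltry.
rewrite /Dist.
set S := [set rho : R | _].
have claim : forall rho, S rho ->
    (Rev P2 Y <= Rev P1 X + ((2 * M + 1) * Num.sqrt rho)%:E)%E /\ (Rev P1 X <= Rev P2 Y + ((2 * M + 1) * Num.sqrt rho)%:E)%E.
  move=> rho [r0 hr].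
  case: (boolP (rho < 1)) => r1; last rewrite -leNgt in r1.
    split.
      apply: (@main_dir R k d1 T1 P1 X d2 T2 P2 Y M mX mY X_nonneg Y_nonneg M0 X_bd Y_bd rho r0 r1).
      by move=> A mA; have [] := hr A mA.
    apply: (@main_dir R k d2 T2 P2 Y d1 T1 P1 X M mY mX Y_nonneg X_nonneg M0 Y_bd X_bd rho r0 r1).
    by move=> A mA; have [] := hr A mA.
  have s1 : 1 <= Num.sqrt rho by rewrite -sqrtr1 ler_wsqrtr.
  have K : M <= (2 * M + 1) * Num.sqrt rho.
    have : 2 * M + 1 <= (2 * M + 1) * Num.sqrt rho.
      by rewrite -[X in X <= _]mulr1 ler_wpM2l //; lra.
    lra.
  rewrite -(fineK fX) -(fineK fY) in hX0 hXM hY0 hYM *.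
  rewrite -!EFinD !lee_fin in hX0 hXM hY0 hYM *.
  split; lra.
have S2 : S 2.
  split => // A mA.
  have mXA : measurable (X @^-1` A) by have := mX measurableT _ mA; rewrite setTI.
  have mYA : measurable (Y @^-1` A) by have := mY measurableT _ mA; rewrite setTI.
  split.
    apply: le_trans (probability_le1 P1 mXA) _.
    by apply: lee_paddl => //; rewrite lee_fin ler1n.
  apply: le_trans (probability_le1 P2 mYA) _.
  by apply: lee_paddl => //; rewrite lee_fin ler1n.
rewrite -(fineK fX) -(fineK fY) in claim *.
rewrite -EFinB abse_EFin lee_fin.
move: (fine (Rev P1 X)) (fine (Rev P2 Y)) claim => rx ry claim.
have K0 : 0 < 2 * M + 1 by lra.
set a := `|rx - ry| / (2 * M + 1).
have ha : a ^+ 2 <= inf S.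
  apply: lb_le_inf; first by exists 2.
  move=> rho Srho; have [h1 h2] := claim rho Srho.
  rewrite -!EFinD !lee_fin in h1 h2.
  have r0 : 0 <= rho by case: Srho => /ltW.
  have : a <= Num.sqrt rho.
    rewrite /a ler_pdivrMr // mulrC ler_norml; apply/andP; split; lra.
  move=> h; rewrite -(sqr_sqrtr r0) ler_pXn2r // ?nnegrE //.
  by rewrite /a divr_ge0 // ltW.
have : a <= Num.sqrt (inf S).
  rewrite -(ger0_norm (_ : 0 <= a)); last by rewrite /a divr_ge0 // ltW.
  by rewrite -sqrtr_sqr ler_wsqrtr.
rewrite /a ler_pdivrMr // mulrC; exact.
Qed.
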